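(* For every $c_*\in(0,1/8]$ there exist constants $C,C'>0$ (depending only on $c_*$, $s$ and the $\lambda_i$) such that the following holds. Let $\varepsilon,\delta\in(0,1]$, $R\geq1$, frequencies $\mathbf{z}_1,\dots,\mathbf{z}_R$ with phases $\phi_1,\dots,\phi_R$, assume $N\geq(2/(\varepsilon\delta))^{CR^3}$, and let $(q,U,V,(r_n)_{n\in\mathbb{Z}},P,(Q_n)_{n\in\mathbb{Z}})$ be a linearization system with parameter $c_*$ for $(\varepsilon,\delta,\phi_1,\dots,\phi_R)$. For $h:\mathbb{Z}\to\mathbb{C}$ supported in $[N]$ define $\widetilde h:[N]\to\mathbb{C}$ by $$\widetilde h(n)=\frac{1}{|P|}\sum_{m\in P}\frac{1}{|Q_{n-m}|}\sum_{k\in Q_{n-m}}h(n+k).$$ If $\|h\|_\infty\leq\delta^{-1}$, then for all $i\in[R]$ $$\Big|\frac1N\sum_{n\in[N]}h(n)e(\phi_i(n))-\frac1N\sum_{n\in[N]}\widetilde h(n)e(\phi_i(n))\Big|\leq C'\varepsilon,$$ and $$\Big|\frac1N\sum_{n\in[N]}h(n)-\frac1N\sum_{n\in[N]}\widetilde h(n)\Big|\leq C'\varepsilon.$$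
   Context: $[N]=\{1,\dots,N\}$, $e(x)=e^{2\pi i x}$, $\|x\|$ is the distance from $x$ to the nearest integer. $M$ is a prime with $Y\leq M\leq 2Y$, $Y=2(|\lambda_1|+\dots+|\lambda_s|)N$, for fixed nonzero integers $\lambda_1,\dots,\lambda_s$. For $\mathbf{z}_i=(x_i,y_i)\in\mathbb{Z}_M\times\mathbb{Z}_{M^2}$, $\phi_i(n)=\frac{x_i}{M}n+\frac{y_i}{M^2}n^2$. A linearization system with parameter $c_*$ for $(\varepsilon,\delta,\phi_1,\dots,\phi_R)$ consists of integers $q\geq1$, $U,V\geq1$, $r_n\geq1$ ($n\in\mathbb{Z}$) with $N^{c_*/R^2}\leq U\leq 2N^{c_*/R^2}$, $U^{c_*/R}\leq V\leq 2U^{c_*/R}$, $q\leq N^{1/4}$, $r_n\leq U^{1/4}$, together with $P=\{q,2q,\dots,Uq\}$ and $Q_n=\{qr_n,2qr_n,\dots,Vqr_n\}$, such that $\|\phi_i(n+m+k)-\phi_i(n+m)\|\leq\varepsilon\delta$ for all $n\in[N]$, $m\in P$, $k\in Q_n$, $i\in[R]$. *)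

(* Defs.v *)
From Stdlib Require Import Reals ZArith Znumtheory List Lia Lra.
Open Scope R_scope.

Definition Cx : Type := (R * R)%type.
Definition Cx0 : Cx := (0, 0).
Definition Cxadd (z w : Cx) : Cx := (fst z + fst w, snd z + snd w).
Definition Cxsub (z w : Cx) : Cx := (fst z - fst w, snd z - snd w).
Definition Cxmul (z w : Cx) : Cx :=
  (fst z * fst w - snd z * snd w, fst z * snd w + snd z * fst w).
Definition Cxscale (a : R) (z : Cx) : Cx := (a * fst z, a * snd z).
Definition Cxmod (z : Cx) : R := sqrt (fst z ^ 2 + snd z ^ 2).

Definition ee (x : R) : Cx := (cos (2 * PI * x), sin (2 * PI * x)).

Definition dist_int (x : R) : R := Rmin (frac_part x) (1 - frac_part x).

Definition Cxsum (a len : nat) (f : nat -> Cx) : Cx :=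
  fold_right (fun j acc => Cxadd (f j) acc) Cx0 (seq a len).

(* phi_i(n) = x_i n / M + y_i n^2 / M^2, with x_i in Z_M, y_i in Z_{M^2}
   represented by integer representatives. *)
Definition phase (M xi yi : Z) (n : Z) : R :=
  IZR xi * IZR n / IZR M + IZR yi * IZR n ^ 2 / IZR M ^ 2.

(* Linearization system with parameter cstar for (eps, delta, phi_1..phi_R).
   P = {q, 2q, ..., Uq},  Q_n = {q r_n, 2 q r_n, ..., V q r_n}. *)
Definition linearization_system (cstar eps delta : R) (R_ N : nat)
  (phi : nat -> Z -> R) (q U V : nat) (r : Z -> nat) : Prop :=
  (1 <= q)%nat /\ (1 <= U)%nat /\ (1 <= V)%nat /\
  (forall n : Z, (1 <= r n)%nat) /\
  Rpower (INR N) (cstar / INR R_ ^ 2) <= INR U <=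
    2 * Rpower (INR N) (cstar / INR R_ ^ 2) /\
  Rpower (INR U) (cstar / INR R_) <= INR V <= 2 * Rpower (INR U) (cstar / INR R_) /\
  INR q <= Rpower (INR N) (1/4) /\
  (forall n : Z, INR (r n) <= Rpower (INR U) (1/4)) /\
  (forall (n : nat) (j l i : nat),
      (1 <= n <= N)%nat -> (1 <= j <= U)%nat -> (1 <= l <= V)%nat ->
      (1 <= i <= R_)%nat ->
      let m := (Z.of_nat j * Z.of_nat q)%Z in
      let k := (Z.of_nat l * Z.of_nat q * Z.of_nat (r (Z.of_nat n)))%Z in
      dist_int (phi i (Z.of_nat n + m + k)%Z - phi i (Z.of_nat n + m)%Z)
        <= eps * delta).

(* htilde(n) = 1/|P| sum_{m in P} 1/|Q_{n-m}| sum_{k in Q_{n-m}} h(n+k),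
   with |P| = U, |Q_n| = V (q, r_n >= 1). *)
Definition htilde (q U V : nat) (r : Z -> nat) (h : Z -> Cx) (n : Z) : Cx :=
  Cxscale (/ INR U) (Cxsum 1 U (fun j =>
    let m := (Z.of_nat j * Z.of_nat q)%Z in
    Cxscale (/ INR V) (Cxsum 1 V (fun l =>
      h (n + Z.of_nat l * Z.of_nat q * Z.of_nat (r (n - m)%Z))%Z)))).

Definition avgN (N : nat) (f : Z -> Cx) : Cx :=
  Cxscale (/ INR N) (Cxsum 1 N (fun n => f (Z.of_nat n))).

(* Main.v *)
Require Import Defs.
From Stdlib Require Import Reals ZArith Znumtheory List Lia Lra.
From Coquelicot Require Import Complex.
Open Scope R_scope.


Lemma cx_eq (z w : Cx) : fst z = fst w -> snd z = snd w -> z = w.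
Proof. destruct z, w; simpl; intros; subst; reflexivity. Qed.

Ltac cxring := apply cx_eq; simpl; ring.

Lemma Cxmod_tri z w : Cxmod (Cxadd z w) <= Cxmod z + Cxmod w.
Proof. exact (Cmod_triangle z w). Qed.

Lemma Cxmod_mul z w : Cxmod (Cxmul z w) = Cxmod z * Cxmod w.
Proof. exact (Cmod_mult z w). Qed.

Lemma Cxmod_ge0 z : 0 <= Cxmod z.
Proof. exact (Cmod_ge_0 z). Qed.

Lemma Cxmod_sub_sym z w : Cxmod (Cxsub z w) = Cxmod (Cxsub w z).
Proof.
  replace (Cxsub w z) with (Copp (Cxsub z w)) by cxring.
  symmetry; exact (Cmod_opp _).
Qed.

Lemma Cxmod_sub_trans a b c :
  Cxmod (Cxsub a c) <= Cxmod (Cxsub a b) + Cxmod (Cxsub b c).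
Proof.
  replace (Cxsub a c) with (Cxadd (Cxsub a b) (Cxsub b c)) by cxring.
  apply Cxmod_tri.
Qed.

Lemma Cxmod_scale a z : Cxmod (Cxscale a z) = Rabs a * Cxmod z.
Proof.
  replace (Cxscale a z) with (Cxmul (RtoC a) z) by cxring.
  rewrite Cxmod_mul. unfold Cxmod. rewrite <- (Cmod_R a). reflexivity.
Qed.

Lemma Cxmod_0 : Cxmod Cx0 = 0.
Proof. exact Cmod_0. Qed.

Lemma Cxsum_0 a f : Cxsum a 0 f = Cx0.
Proof. reflexivity. Qed.
Lemma Cxsum_cons a n f : Cxsum a (S n) f = Cxadd (f a) (Cxsum (S a) n f).
Proof. reflexivity. Qed.

Lemma Cxsum_ext a n f g : (forall j, (a <= j < a + n)%nat -> f j = g j) ->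
  Cxsum a n f = Cxsum a n g.
Proof.
  revert a; induction n; intros a H; [reflexivity|].
  rewrite !Cxsum_cons. rewrite H by lia. rewrite (IHn (S a)) by (intros; apply H; lia).
  reflexivity.
Qed.

Lemma Cxsum_add a n f g :
  Cxsum a n (fun j => Cxadd (f j) (g j)) = Cxadd (Cxsum a n f) (Cxsum a n g).
Proof.
  revert a; induction n; intros a. cxring.
  rewrite !Cxsum_cons, IHn. cxring.
Qed.

Lemma Cxsum_sub a n f g :
  Cxsum a n (fun j => Cxsub (f j) (g j)) = Cxsub (Cxsum a n f) (Cxsum a n g).
Proof.
  revert a; induction n; intros a. cxring.
  rewrite !Cxsum_cons, IHn. cxring.
Qed.

Lemma Cxsum_scale a n c f :
  Cxsum a n (fun j => Cxscale c (f j)) = Cxscale c (Cxsum a n f).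
Proof.
  revert a; induction n; intros a. cxring.
  rewrite !Cxsum_cons, IHn. cxring.
Qed.

Lemma Cxsum_mulr a n f w :
  Cxsum a n (fun j => Cxmul (f j) w) = Cxmul (Cxsum a n f) w.
Proof.
  revert a; induction n; intros a. cxring.
  rewrite !Cxsum_cons, IHn. cxring.
Qed.

Lemma Cxsum_const a n z : Cxsum a n (fun _ => z) = Cxscale (INR n) z.
Proof.
  revert a; induction n; intros a. simpl. cxring.
  rewrite !Cxsum_cons, IHn, S_INR. cxring.
Qed.

Lemma Cxsum_bound a n f B :
  (forall j, (a <= j < a + n)%nat -> Cxmod (f j) <= B) ->
  Cxmod (Cxsum a n f) <= INR n * B.
Proof.
  revert a; induction n; intros a H.
  - rewrite Cxsum_0, Cxmod_0. simpl. lra.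
  - rewrite Cxsum_cons, S_INR.
    eapply Rle_trans; [apply Cxmod_tri|].
    assert (H1 := H a ltac:(lia)).
    assert (H2 := IHn (S a) ltac:(intros; apply H; lia)). lra.
Qed.

Lemma Cxsum_swap a n b m (f : nat -> nat -> Cx) :
  Cxsum a n (fun j => Cxsum b m (fun k => f j k)) =
  Cxsum b m (fun k => Cxsum a n (fun j => f j k)).
Proof.
  revert a; induction n; intros a.
  - simpl. rewrite (Cxsum_ext b m _ (fun _ => Cx0)) by reflexivity.
    rewrite Cxsum_const. cxring.
  - rewrite Cxsum_cons, IHn.
    rewrite <- Cxsum_add. apply Cxsum_ext. intros; reflexivity.
Qed.

Lemma Cxsum_shift1 (G : Z -> Cx) a n :
  Cxadd (Cxsum a n (fun j => G (Z.of_nat j + 1)%Z)) (G (Z.of_nat a)) =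
  Cxadd (Cxsum a n (fun j => G (Z.of_nat j))) (G (Z.of_nat (a + n))).
Proof.
  revert a; induction n; intros a.
  - rewrite Nat.add_0_r. reflexivity.
  - rewrite !Cxsum_cons. specialize (IHn (S a)).
    replace (Z.of_nat a + 1)%Z with (Z.of_nat (S a)) in * by lia.
    replace (a + S n)%nat with (S a + n)%nat by lia.
    apply (f_equal fst) in IHn as I1. apply (f_equal snd) in IHn as I2.
    simpl in I1, I2. apply cx_eq; simpl; lra.
Qed.

Lemma Cxsum_shift (G : Z -> Cx) B a n s :
  (forall z, Cxmod (G z) <= B) ->
  Cxmod (Cxsub (Cxsum a n (fun j => G (Z.of_nat j)))
               (Cxsum a n (fun j => G (Z.of_nat j + Z.of_nat s)%Z))) <= 2 * INR s * B.
Proof.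
  intros HB. induction s.
  - simpl. rewrite (Cxsum_ext a n (fun j => G (Z.of_nat j + 0)%Z) (fun j => G (Z.of_nat j)))
      by (intros; f_equal; lia).
    replace (Cxsub _ _) with Cx0 by cxring. rewrite Cxmod_0. lra.
  - eapply Rle_trans; [apply Cxmod_sub_trans with
      (b := Cxsum a n (fun j => G (Z.of_nat j + Z.of_nat s)%Z))|].
    rewrite (Cxsum_ext a n (fun j => G (Z.of_nat j + Z.of_nat (S s))%Z)
               (fun j => G (Z.of_nat j + 1 + Z.of_nat s)%Z)) by (intros; f_equal; lia).
    set (X := Cxsum a n (fun j => G (Z.of_nat j + 1 + Z.of_nat s)%Z)) in *.
    set (Y := Cxsum a n (fun j => G (Z.of_nat j + Z.of_nat s)%Z)) in *.
    assert (E : Cxadd X (G (Z.of_nat a + Z.of_nat s)%Z) = Cxadd Y (G (Z.of_nat (a+n) + Z.of_nat s)%Z))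
      by exact (Cxsum_shift1 (fun z => G (z + Z.of_nat s)%Z) a n).
    replace (Cxsub Y X) with (Cxsub (G (Z.of_nat a + Z.of_nat s)%Z) (G (Z.of_nat (a+n) + Z.of_nat s)%Z)).
    2:{ apply (f_equal fst) in E as I1. apply (f_equal snd) in E as I2.
        simpl in I1, I2. apply cx_eq; simpl; lra. }
    rewrite S_INR.
    assert (H1 := HB (Z.of_nat (a+n) + Z.of_nat s)%Z).
    assert (H2 := HB (Z.of_nat a + Z.of_nat s)%Z).
    assert (H3 : Cxmod (Cxsub (G (Z.of_nat a + Z.of_nat s)%Z) (G (Z.of_nat (a + n) + Z.of_nat s)%Z)) <= B + B).
    { replace (Cxsub _ _) with (Cxadd (G (Z.of_nat a + Z.of_nat s)%Z) (Copp (G (Z.of_nat (a + n) + Z.of_nat s)%Z))) by cxring.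
      eapply Rle_trans; [apply Cxmod_tri|].
      change (Cxmod (Copp ?x)) with (Coquelicot.Complex.Cmod (Copp x)).
      rewrite Coquelicot.Complex.Cmod_opp. change (Coquelicot.Complex.Cmod ?x) with (Cxmod x). lra. }
    lra.
Qed.

Lemma Cxmul_scale a z w : Cxmul (Cxscale a z) w = Cxscale a (Cxmul z w).
Proof. cxring. Qed.

Lemma Cxsub_scale a z w : Cxsub (Cxscale a z) (Cxscale a w) = Cxscale a (Cxsub z w).
Proof. cxring. Qed.

Section Core.
Variables (N U V q : nat) (r : Z -> nat) (h g : Z -> Cx) (B eta rho : R).
Hypotheses (HN : (1 <= N)%nat) (HU : (1 <= U)%nat) (HV : (1 <= V)%nat) (HB0 : 0 <= B)
  (Hh : forall n, Cxmod (h n) <= B) (Hg : forall n, Cxmod (g n) <= 1)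
  (Hr : forall n, INR (r n) <= rho)
  (Hlin : forall n j l, (1 <= n <= N)%nat -> (1 <= j <= U)%nat -> (1<= l <= V)%nat ->
     Cxmod (Cxsub (g (Z.of_nat n + Z.of_nat j * Z.of_nat q)%Z)
        (g (Z.of_nat n + Z.of_nat j*Z.of_nat q + Z.of_nat l * Z.of_nat q * Z.of_nat (r (Z.of_nat n)))%Z)) <= eta).

Let Zq := Z.of_nat q.
Let Fz z := Cxmul (h z) (g z).
Let T j l z := Cxmul (h (z + Z.of_nat l * Zq * Z.of_nat (r (z - Z.of_nat j * Zq)))%Z) (g z).

Lemma Fz_bound z : Cxmod (Fz z) <= B.
Proof.
  unfold Fz. rewrite Cxmod_mul. specialize (Hh z). specialize (Hg z).
  assert (0 <= Cxmod (g z)) by apply Cxmod_ge0.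
  assert (0 <= Cxmod (h z)) by apply Cxmod_ge0. nra.
Qed.

Lemma T_bound j l z : Cxmod (T j l z) <= B.
Proof.
  unfold T. rewrite Cxmod_mul. specialize (Hg z).
  assert (H1 := Hh (z + Z.of_nat l * Zq * Z.of_nat (r (z - Z.of_nat j * Zq)))%Z).
  assert (0 <= Cxmod (g z)) by apply Cxmod_ge0.
  assert (0 <= Cxmod (h (z + Z.of_nat l * Zq * Z.of_nat (r (z - Z.of_nat j * Zq)))%Z)) by apply Cxmod_ge0.
  nra.
Qed.

Lemma step_htilde nn :
  Cxmul (htilde q U V r h (Z.of_nat nn)) (g (Z.of_nat nn)) =
  Cxscale (/ INR U) (Cxscale (/ INR V)
    (Cxsum 1 U (fun j => Cxsum 1 V (fun l => T j l (Z.of_nat nn))))).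
Proof.
  unfold htilde. rewrite Cxmul_scale, <- Cxsum_mulr. f_equal.
  rewrite <- Cxsum_scale. apply Cxsum_ext; intros j _. cbv zeta.
  rewrite Cxmul_scale, <- Cxsum_mulr. reflexivity.
Qed.

Lemma per_l l : (1 <= l <= V)%nat ->
  Cxmod (Cxsub (Cxsum 1 U (fun j => Cxsum 1 N (fun n => Fz (Z.of_nat n))))
               (Cxsum 1 U (fun j => Cxsum 1 N (fun n => T j l (Z.of_nat n)))))
  <= INR U * (2 * (INR U * INR q) * B) + INR N * (2 * (INR V * rho) * B)
     + INR U * (INR N * (B * eta)) + INR U * (2 * (INR U * INR q) * B).
Proof.
  intros Hl.
  set (S1 := Cxsum 1 U (fun j => Cxsum 1 N (fun n => Fz (Z.of_nat n + Z.of_nat j * Zq)%Z))).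
  set (S2 := Cxsum 1 U (fun j => Cxsum 1 N (fun n =>
        Fz (Z.of_nat n + Z.of_nat j * Zq + Z.of_nat l * Zq * Z.of_nat (r (Z.of_nat n)))%Z))).
  set (S3 := Cxsum 1 U (fun j => Cxsum 1 N (fun n =>
        Cxmul (h (Z.of_nat n + Z.of_nat j * Zq + Z.of_nat l * Zq * Z.of_nat (r (Z.of_nat n)))%Z)
              (g (Z.of_nat n + Z.of_nat j * Zq)%Z)))).
  eapply Rle_trans; [apply Cxmod_sub_trans with (b := S1)|].
  eapply Rle_trans; [apply Rplus_le_compat_l, Cxmod_sub_trans with (b := S2)|].
  eapply Rle_trans; [apply Rplus_le_compat_l, Rplus_le_compat_l, Cxmod_sub_trans with (b := S3)|].
  assert (Hqq : forall j, (1 <= j < 1 + U)%nat -> 2 * INR (j * q) * B <= 2 * (INR U * INR q) * B).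
  { intros j Hj. rewrite mult_INR. assert (INR j <= INR U) by (apply le_INR; lia).
    assert (0 <= INR q) by apply pos_INR.
    assert (INR j * INR q <= INR U * INR q) by (apply Rmult_le_compat_r; lra).
    apply Rmult_le_compat_r; lra. }
  assert (A1 : Cxmod (Cxsub (Cxsum 1 U (fun j => Cxsum 1 N (fun n => Fz (Z.of_nat n)))) S1)
               <= INR U * (2 * (INR U * INR q) * B)).
  { unfold S1. rewrite <- Cxsum_sub. apply Cxsum_bound. intros j Hj.
    rewrite (Cxsum_ext 1 N (fun n => Fz (Z.of_nat n + Z.of_nat j * Zq)%Z)
                           (fun n => Fz (Z.of_nat n + Z.of_nat (j * q))%Z))
      by (intros; unfold Zq; rewrite Nat2Z.inj_mul; reflexivity).
    eapply Rle_trans; [apply Cxsum_shift, Fz_bound|]. apply Hqq; lia. }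
  assert (A2 : Cxmod (Cxsub S1 S2) <= INR N * (2 * (INR V * rho) * B)).
  { unfold S1, S2. rewrite (Cxsum_swap 1 U 1 N), (Cxsum_swap 1 U 1 N).
    rewrite <- Cxsum_sub. apply Cxsum_bound. intros n Hn.
    set (G := fun z => Fz (Z.of_nat n + z * Zq)%Z).
    rewrite (Cxsum_ext 1 U (fun j => Fz (Z.of_nat n + Z.of_nat j * Zq)%Z)
                           (fun j => G (Z.of_nat j))) by reflexivity.
    rewrite (Cxsum_ext 1 U (fun j => Fz (Z.of_nat n + Z.of_nat j * Zq + Z.of_nat l * Zq * Z.of_nat (r (Z.of_nat n)))%Z)
       (fun j => G (Z.of_nat j + Z.of_nat (l * r (Z.of_nat n)))%Z))
      by (intros; unfold G; f_equal; rewrite Nat2Z.inj_mul; ring).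
    eapply Rle_trans; [apply Cxsum_shift; intros; apply Fz_bound|].
    rewrite mult_INR. assert (INR l <= INR V) by (apply le_INR; lia).
    assert (0 <= INR (r (Z.of_nat n))) by apply pos_INR.
    assert (0 <= INR l) by apply pos_INR.
    specialize (Hr (Z.of_nat n)).
    assert (INR l * INR (r (Z.of_nat n)) <= INR V * rho) by (apply Rmult_le_compat; lra).
    apply Rmult_le_compat_r; lra. }
  assert (A3 : Cxmod (Cxsub S2 S3) <= INR U * (INR N * (B * eta))).
  { unfold S2, S3. rewrite <- Cxsum_sub. apply Cxsum_bound. intros j Hj.
    rewrite <- Cxsum_sub. apply Cxsum_bound. intros n Hn.
    unfold Fz. match goal with |- Cxmod (Cxsub (Cxmul ?a ?b) (Cxmul ?a ?c)) <= _ =>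
      replace (Cxsub (Cxmul a b) (Cxmul a c)) with (Cxmul a (Cxsub b c)) by cxring end.
    rewrite Cxmod_mul, (Cxmod_sub_sym (g _)). apply Rmult_le_compat; try apply Cxmod_ge0; [apply Hh|].
    apply Hlin; lia. }
  assert (A4 : Cxmod (Cxsub S3 (Cxsum 1 U (fun j => Cxsum 1 N (fun n => T j l (Z.of_nat n)))))
               <= INR U * (2 * (INR U * INR q) * B)).
  { unfold S3. rewrite <- Cxsum_sub. apply Cxsum_bound. intros j Hj.
    rewrite Cxmod_sub_sym.
    rewrite (Cxsum_ext 1 N (fun n =>
        Cxmul (h (Z.of_nat n + Z.of_nat j * Zq + Z.of_nat l * Zq * Z.of_nat (r (Z.of_nat n)))%Z)
              (g (Z.of_nat n + Z.of_nat j * Zq)%Z)) (fun n => T j l (Z.of_nat n + Z.of_nat (j * q))%Z)).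
    2:{ intros n _. unfold T. rewrite Nat2Z.inj_mul. fold Zq.
        replace (Z.of_nat n + Z.of_nat j * Zq - Z.of_nat j * Zq)%Z with (Z.of_nat n) by ring.
        reflexivity. }
    eapply Rle_trans; [apply Cxsum_shift; intros; apply T_bound|]. apply Hqq; lia. }
  lra.
Qed.

Lemma core :
  Cxmod (Cxsub (avgN N (fun n => Cxmul (h n) (g n)))
               (avgN N (fun n => Cxmul (htilde q U V r h n) (g n))))
  <= 4 * INR U * INR q * B / INR N + 2 * INR V * rho * B / INR U + B * eta.
Proof.
  assert (UP : 0 < INR U) by (apply lt_0_INR; lia).
  assert (VP : 0 < INR V) by (apply lt_0_INR; lia).
  assert (NP : 0 < INR N) by (apply lt_0_INR; lia).
  unfold avgN. cbv beta. rewrite Cxsub_scale, Cxmod_scale.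
  rewrite (Cxsum_ext 1 N (fun n => Cxmul (htilde q U V r h (Z.of_nat n)) (g (Z.of_nat n)))
     (fun n => Cxscale (/ INR U) (Cxscale (/ INR V)
        (Cxsum 1 U (fun j => Cxsum 1 V (fun l => T j l (Z.of_nat n)))))))
    by (intros; apply step_htilde).
  rewrite Cxsum_scale, Cxsum_scale.
  rewrite (Cxsum_swap 1 N 1 U).
  rewrite (Cxsum_ext 1 U (fun j => Cxsum 1 N (fun n => Cxsum 1 V (fun l => T j l (Z.of_nat n))))
             (fun j => Cxsum 1 V (fun l => Cxsum 1 N (fun n => T j l (Z.of_nat n)))))
    by (intros; apply Cxsum_swap).
  rewrite (Cxsum_swap 1 U 1 V).
  assert (EF : Cxsum 1 N (fun n => Cxmul (h (Z.of_nat n)) (g (Z.of_nat n))) =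
     Cxscale (/ INR U) (Cxscale (/ INR V)
       (Cxsum 1 V (fun l => Cxsum 1 U (fun j => Cxsum 1 N (fun n => Fz (Z.of_nat n))))))).
  { rewrite !Cxsum_const. apply cx_eq; unfold Fz; simpl; field; lra. }
  rewrite EF, !Cxsub_scale, <- Cxsum_sub, !Cxmod_scale.
  set (E := INR U * (2 * (INR U * INR q) * B) + INR N * (2 * (INR V * rho) * B)
     + INR U * (INR N * (B * eta)) + INR U * (2 * (INR U * INR q) * B)).
  assert (HS : Cxmod (Cxsum 1 V (fun l => Cxsub
        (Cxsum 1 U (fun j => Cxsum 1 N (fun n => Fz (Z.of_nat n))))
        (Cxsum 1 U (fun j => Cxsum 1 N (fun n => T j l (Z.of_nat n)))))) <= INR V * E).
  { apply Cxsum_bound. intros l Hl. apply per_l. lia. }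
  rewrite !Rabs_right by (apply Rle_ge, Rlt_le, Rinv_0_lt_compat; lra).
  apply Rle_trans with (/ INR N * (/ INR U * (/ INR V * (INR V * E)))).
  { apply Rmult_le_compat_l; [apply Rlt_le, Rinv_0_lt_compat; lra|].
    apply Rmult_le_compat_l; [apply Rlt_le, Rinv_0_lt_compat; lra|].
    apply Rmult_le_compat_l; [apply Rlt_le, Rinv_0_lt_compat; lra|]. exact HS. }
  right. unfold E. field. lra.
Qed.

End Core.

Lemma Cxmod_le_l1 z : Cxmod z <= Rabs (fst z) + Rabs (snd z).
Proof.
  unfold Cxmod. rewrite <- (sqrt_square (Rabs (fst z) + Rabs (snd z))).
  2:{ assert (0 <= Rabs (fst z)) by apply Rabs_pos. assert (0 <= Rabs (snd z)) by apply Rabs_pos. lra. }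
  apply sqrt_le_1_alt.
  assert (0 <= Rabs (fst z)) by apply Rabs_pos. assert (0 <= Rabs (snd z)) by apply Rabs_pos.
  assert (H1 : fst z ^ 2 = Rabs (fst z) * Rabs (fst z)) by (rewrite <- Rabs_mult; simpl; rewrite Rmult_1_r; symmetry; apply Rabs_right; apply Rle_ge; apply Rle_0_sqr).
  assert (H2 : snd z ^ 2 = Rabs (snd z) * Rabs (snd z)) by (rewrite <- Rabs_mult; simpl; rewrite Rmult_1_r; symmetry; apply Rabs_right; apply Rle_ge; apply Rle_0_sqr).
  rewrite H1, H2. nra.
Qed.

Lemma cos_lip x y : Rabs (cos x - cos y) <= Rabs (x - y).
Proof.
  destruct (MVT_abs cos (fun t => - sin t) y x) as [c [Hc _]].
  { intros; apply derivable_pt_lim_cos. }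
  rewrite Hc, Rabs_Ropp. assert (Rabs (sin c) <= 1) by (apply Rabs_le; apply SIN_bound).
  assert (0 <= Rabs (x - y)) by apply Rabs_pos. nra.
Qed.

Lemma sin_lip x y : Rabs (sin x - sin y) <= Rabs (x - y).
Proof.
  destruct (MVT_abs sin cos y x) as [c [Hc _]].
  { intros; apply derivable_pt_lim_sin. }
  rewrite Hc. assert (Rabs (cos c) <= 1) by (apply Rabs_le; apply COS_bound).
  assert (0 <= Rabs (x - y)) by apply Rabs_pos. nra.
Qed.

Lemma ee_period b k : ee (b - IZR k) = ee b.
Proof.
  unfold ee. destruct (Z_le_gt_dec 0 k) as [Hk|Hk].
  - replace k with (Z.of_nat (Z.to_nat k)) by lia. rewrite <- INR_IZR_INZ.
    set (n := Z.to_nat k).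
    rewrite <- (cos_period (2 * PI * (b - INR n)) n), <- (sin_period (2 * PI * (b - INR n)) n).
    f_equal; f_equal; ring.
  - replace k with (- Z.of_nat (Z.to_nat (- k)))%Z by lia. rewrite opp_IZR, <- INR_IZR_INZ.
    set (n := Z.to_nat (-k)).
    replace (2 * PI * (b - - INR n)) with (2 * PI * b + 2 * INR n * PI) by ring.
    rewrite cos_period, sin_period. reflexivity.
Qed.

Lemma dist_int_witness d : exists k : Z, Rabs (d - IZR k) <= dist_int d.
Proof.
  unfold dist_int. destruct (base_fp d) as [F1 F2].
  unfold frac_part in *. unfold Rmin. destruct (Rle_dec _ _).
  - exists (Int_part d). rewrite Rabs_right; lra.
  - exists (Int_part d + 1)%Z. rewrite plus_IZR. rewrite Rabs_left1; lra.
Qed.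

Lemma ee_lip a b : Cxmod (Cxsub (ee a) (ee b)) <= 4 * PI * dist_int (b - a).
Proof.
  destruct (dist_int_witness (b - a)) as [k Hk].
  rewrite <- (ee_period b k).
  eapply Rle_trans; [apply Cxmod_le_l1|]. unfold ee; simpl.
  assert (H1 := cos_lip (2 * PI * a) (2 * PI * (b - IZR k))).
  assert (H2 := sin_lip (2 * PI * a) (2 * PI * (b - IZR k))).
  replace (2 * PI * a - 2 * PI * (b - IZR k)) with ((2 * PI) * - (b - a - IZR k)) in H1, H2 by ring.
  rewrite Rabs_mult, Rabs_Ropp, (Rabs_right (2 * PI)) in H1, H2 by (apply Rle_ge; generalize PI_RGT_0; lra).
  generalize PI_RGT_0; intro. nra.
Qed.

Lemma ee_mod x : Cxmod (ee x) <= 1.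
Proof.
  unfold Cxmod, ee; simpl. rewrite !Rmult_1_r.
  rewrite <- sqrt_1. apply sqrt_le_1_alt.
  assert (H := sin2_cos2 (2 * PI * x)). unfold Rsqr in H. lra.
Qed.

Lemma term_bound (eps delta Nr P : R) :
  0 < eps -> 0 < delta -> 1 <= Nr -> 2 / (eps * delta) <= sqrt Nr ->
  0 <= P -> P <= 2 * sqrt Nr ->
  4 * P * / delta / Nr <= 4 * eps.
Proof.
  intros He Hd HN Hx HP HPs.
  set (s := sqrt Nr) in *.
  assert (Hs : 0 < s) by (unfold s; apply sqrt_lt_R0; lra).
  assert (HNs : Nr = s * s) by (unfold s; rewrite sqrt_sqrt; lra).
  assert (Hed : 0 < eps * delta) by nra.
  assert (H2 : 2 <= eps * delta * s).
  { apply Rmult_le_compat_l with (r := eps * delta) in Hx; [|lra].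
    replace (eps * delta * (2 / (eps * delta))) with 2 in Hx by (field; lra). lra. }
  rewrite HNs.
  apply Rle_trans with (4 * (2 * s) * / delta / (s * s)).
  { unfold Rdiv. apply Rmult_le_compat_r; [left; apply Rinv_0_lt_compat; nra|].
    apply Rmult_le_compat_r; [left; apply Rinv_0_lt_compat; lra|]. lra. }
  replace (4 * (2 * s) * / delta / (s * s)) with (8 / (delta * s)) by (field; lra).
  apply Rle_trans with (8 / (delta * (2 / (eps * delta)))).
  2:{ right. field. lra. }
  unfold Rdiv. apply Rmult_le_compat_l; [lra|].
  apply Rinv_le_contravar. { apply Rmult_lt_0_compat; [lra|]. apply Rdiv_lt_0_compat; lra. }
  apply Rmult_le_compat_l; lra.
Qed.

Lemma Rpower_ge1 b e : 1 <= b -> 0 <= e -> 1 <= Rpower b e.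
Proof. intros. rewrite <- (Rpower_O b) by lra. apply Rle_Rpower; lra. Qed.

Lemma Rpower_pos b e : 0 < Rpower b e.
Proof. unfold Rpower. apply exp_pos. Qed.

Lemma two_facts (Nr a b P Q : R) :
  1 <= Nr -> 0 <= a <= 1/8 -> 0 <= P <= 2 * Rpower Nr a -> 0 <= Q <= Rpower Nr (1/4) ->
  P * Q <= 2 * sqrt Nr.
Proof.
  intros HN Ha HP HQ.
  assert (H1 : Rpower Nr a <= Rpower Nr (1/8)) by (apply Rle_Rpower; lra).
  assert (H2 : Rpower Nr (1/8) * Rpower Nr (1/4) <= sqrt Nr).
  { rewrite <- Rpower_plus, <- Rpower_sqrt by lra. apply Rle_Rpower; lra. }
  assert (0 < Rpower Nr a) by apply Rpower_pos.
  assert (0 < Rpower Nr (1/4)) by apply Rpower_pos.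
  apply Rle_trans with (2 * Rpower Nr (1/8) * Rpower Nr (1/4)).
  - apply Rmult_le_compat; try lra.
  - lra.
Qed.

Lemma pow_facts (cstar eps delta Rr Nr Ur Vr qr : R) :
  0 < cstar <= 1/8 -> 0 < eps <= 1 -> 0 < delta <= 1 -> 1 <= Rr ->
  Rpower (2 / (eps * delta)) (2 / cstar * Rr ^ 3) <= Nr ->
  Rpower Nr (cstar / Rr ^ 2) <= Ur <= 2 * Rpower Nr (cstar / Rr ^ 2) ->
  Rpower Ur (cstar / Rr) <= Vr <= 2 * Rpower Ur (cstar / Rr) ->
  0 <= qr <= Rpower Nr (1/4) ->
  1 <= Nr /\ 1 <= Ur /\ 2 / (eps * delta) <= sqrt Nr /\ 2 / (eps * delta) <= sqrt Ur /\
  Ur * qr <= 2 * sqrt Nr /\ Vr * Rpower Ur (1/4) <= 2 * sqrt Ur.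
Proof.
  intros Hc He Hd HR HN HU HV Hq.
  set (x := 2 / (eps * delta)) in *.
  assert (Hx : 2 <= x).
  { unfold x. assert (0 < eps * delta <= 1) by nra.
    apply Rmult_le_reg_l with (eps * delta); [lra|].
    replace (eps * delta * (2 / (eps * delta))) with 2 by (field; lra). nra. }
  assert (HR2 : 1 <= Rr ^ 2) by nra.
  assert (HR3 : 1 <= Rr ^ 3) by (simpl; nra).
  assert (HC : 16 <= 2 / cstar).
  { apply Rmult_le_reg_l with cstar; [lra|].
    replace (cstar * (2 / cstar)) with 2 by (field; lra). lra. }
  assert (HCR : 2 <= 2 / cstar * Rr ^ 3) by nra.
  assert (Hx2 : Rpower x 2 = x * x).
  { replace 2 with (INR 2) by (simpl; lra). rewrite Rpower_pow by lra. simpl; ring. }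
  assert (HNx : x * x <= Nr).
  { rewrite <- Hx2. eapply Rle_trans; [|exact HN]. apply Rle_Rpower; lra. }
  assert (HN1 : 1 <= Nr) by nra.
  assert (Ha : 0 <= cstar / Rr ^ 2 <= 1/8).
  { split. unfold Rdiv; apply Rmult_le_pos; [lra|left; apply Rinv_0_lt_compat; lra].
    apply Rle_trans with cstar; [|lra]. unfold Rdiv.
    rewrite <- (Rmult_1_r cstar) at 2. apply Rmult_le_compat_l; [lra|].
    rewrite <- Rinv_1. apply Rinv_le_contravar; lra. }
  assert (HUx : x * x <= Ur).
  { eapply Rle_trans; [|apply HU].
    eapply Rle_trans; [|apply Rle_Rpower_l with (a := Rpower x (2 / cstar * Rr ^ 3)); [lra|split; [apply Rpower_pos|exact HN]]].
    rewrite Rpower_mult, <- Hx2. apply Rle_Rpower; [lra|].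
    replace (2 / cstar * Rr ^ 3 * (cstar / Rr ^ 2)) with (2 * Rr) by (field; split; lra). lra. }
  assert (HU1 : 1 <= Ur) by nra.
  assert (Hsq : forall z, x * x <= z -> x <= sqrt z).
  { intros z Hz. rewrite <- (sqrt_square x) by lra. apply sqrt_le_1_alt; lra. }
  assert (Hb : 0 <= cstar / Rr <= 1/8).
  { split. unfold Rdiv; apply Rmult_le_pos; [lra|left; apply Rinv_0_lt_compat; lra].
    apply Rle_trans with cstar; [|lra]. unfold Rdiv.
    rewrite <- (Rmult_1_r cstar) at 2. apply Rmult_le_compat_l; [lra|].
    rewrite <- Rinv_1. apply Rinv_le_contravar; lra. }
  split; [lra|]. split; [lra|]. split; [apply Hsq; lra|]. split; [apply Hsq; lra|].
  assert (0 < Rpower Nr (cstar / Rr ^ 2)) by apply Rpower_pos.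
  assert (0 < Rpower Ur (cstar / Rr)) by apply Rpower_pos.
  assert (0 < Rpower Ur (1/4)) by apply Rpower_pos.
  split.
  - apply (two_facts Nr (cstar / Rr ^ 2) 0); lra.
  - apply (two_facts Ur (cstar / Rr) 0); lra.
Qed.

Lemma avg_one N f : avgN N f = avgN N (fun n => Cxmul (f n) (1, 0)).
Proof. unfold avgN. f_equal. apply Cxsum_ext; intros. cxring. Qed.

Theorem proposition9p4 :
  forall (lam : list Z), Forall (fun l => l <> 0%Z) lam ->
  forall cstar : R, 0 < cstar <= 1/8 ->
  exists C C' : R, 0 < C /\ 0 < C' /\
  forall (eps delta : R) (R_ N : nat) (M : Z) (x y : nat -> Z)
         (q U V : nat) (r : Z -> nat) (h : Z -> Cx),
    0 < eps <= 1 -> 0 < delta <= 1 -> (1 <= R_)%nat ->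
    (* M prime with Y <= M <= 2Y, Y = 2 (|lam_1| + ... + |lam_s|) N *)
    prime M ->
    let Y := (2 * fold_right Z.add 0 (map Z.abs lam) * Z.of_nat N)%Z in
    (Y <= M <= 2 * Y)%Z ->
    (* frequencies z_i = (x_i, y_i) in Z_M x Z_{M^2} *)
    (forall i, (1 <= i <= R_)%nat ->
       (0 <= x i < M)%Z /\ (0 <= y i < M ^ 2)%Z) ->
    Rpower (2 / (eps * delta)) (C * INR R_ ^ 3) <= INR N ->
    linearization_system cstar eps delta R_ N
      (fun i => phase M (x i) (y i)) q U V r ->
    (* h supported in [N], with sup-norm at most 1/delta *)
    (forall n : Z, h n <> Cx0 -> (1 <= n <= Z.of_nat N)%Z) ->
    (forall n : Z, Cxmod (h n) <= / delta) ->
    (forall i, (1 <= i <= R_)%nat ->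
      Cxmod (Cxsub (avgN N (fun n => Cxmul (h n) (ee (phase M (x i) (y i) n))))
                   (avgN N (fun n => Cxmul (htilde q U V r h n)
                                           (ee (phase M (x i) (y i) n)))))
        <= C' * eps) /\
    Cxmod (Cxsub (avgN N h) (avgN N (htilde q U V r h))) <= C' * eps.
Proof.
  intros lam _ cstar Hc. exists (2 / cstar), 25.
  split; [apply Rdiv_lt_0_compat; lra|]. split; [lra|].
  intros eps delta R_ N M x y q U V r h He Hd HR _ Y _ _ HN Hlin _ Hh.
  destruct Hlin as (Hq1 & HU1 & HV1 & _ & [HUa HUb] & [HVa HVb] & Hq & Hr & Hl).
  assert (HRr : 1 <= INR R_) by (replace 1 with (INR 1) by reflexivity; apply le_INR; lia).
  assert (Hq0 : 0 <= INR q) by apply pos_INR.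
  destruct (pow_facts cstar eps delta (INR R_) (INR N) (INR U) (INR V) (INR q))
    as (N1 & U1 & xN & xU & UqN & VrU); try lra.
  assert (HN1 : (1 <= N)%nat) by (apply INR_le; simpl; lra).
  assert (Hdinv : 0 < / delta) by (apply Rinv_0_lt_compat; lra).
  assert (T1 := term_bound eps delta (INR N) (INR U * INR q) ltac:(lra) ltac:(lra) N1 xN
                  ltac:(apply Rmult_le_pos; lra) UqN).
  assert (Hrho : 0 < Rpower (INR U) (1/4)) by apply Rpower_pos.
  assert (T2 := term_bound eps delta (INR U) (INR V * Rpower (INR U) (1/4)) ltac:(lra) ltac:(lra) U1 xU
                  ltac:(apply Rmult_le_pos; [apply pos_INR|lra]) VrU).
  split.
  - intros i Hi.
    eapply Rle_trans.
    { apply (core N U V q r h (fun n => ee (phase M (x i) (y i) n)) (/ delta)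
               (4 * PI * (eps * delta)) (Rpower (INR U) (1/4))); try assumption; try lra.
      - intros; apply ee_mod.
      - intros n j l Hn Hj Hl'. eapply Rle_trans; [apply ee_lip|].
        apply Rmult_le_compat_l; [generalize PI_RGT_0; lra|].
        specialize (Hl n j l i Hn Hj Hl' Hi). cbv zeta beta in Hl. exact Hl. }
    replace (/ delta * (4 * PI * (eps * delta))) with (4 * PI * eps) by (field; lra).
    assert (PI <= 4) by apply PI_4.
    replace (4 * INR U * INR q * / delta / INR N) with (4 * (INR U * INR q) * / delta / INR N) by (unfold Rdiv; ring).
    replace (2 * INR V * Rpower (INR U) (1 / 4) * / delta / INR U)
      with (/2 * (4 * (INR V * Rpower (INR U) (1 / 4)) * / delta / INR U)) by (field; lra).
    nra.
  - rewrite (avg_one N h), (avg_one N (htilde q U V r h)).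
    eapply Rle_trans.
    { apply (core N U V q r h (fun _ => (1, 0)) (/ delta) 0 (Rpower (INR U) (1/4)));
        try assumption; try lra.
      - intros. unfold Cxmod. cbn [fst snd]. replace (1 ^ 2 + 0 ^ 2) with 1 by ring. rewrite sqrt_1. lra.
      - intros. replace (Cxsub (1, 0) (1, 0)) with Cx0 by cxring. rewrite Cxmod_0. lra. }
    replace (4 * INR U * INR q * / delta / INR N) with (4 * (INR U * INR q) * / delta / INR N) by (unfold Rdiv; ring).
    replace (2 * INR V * Rpower (INR U) (1 / 4) * / delta / INR U)
      with (/2 * (4 * (INR V * Rpower (INR U) (1 / 4)) * / delta / INR U)) by (field; lra).
    lra.
Qed.
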